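(* Let $T_1$ and $T_2$ be two continuous transitive maps of a compact metric space $X$ which commute ($T_1\circ T_2=T_2\circ T_1$). Then $G_k(T_1)=G_k(T_2)$ for all $k\ge1$. In particular, if $T$ and $T^m$ (for some $m\ge2$) are both transitive, then $G_k(T)=G_k(T^m)$ for all $k\ge1$.
   Context: A continuous map $S:X\to X$ is transitive if some orbit $\{S^nx:n\ge0\}$ is dense in $X$. For such $S$: $G_0(S)$ is the set of $\lambda\in\mathbb{C}$ for which there exists a nonzero $h\in C(X)$ with $h\circ S=\lambda h$ (identified with constant functions); for $k\ge1$, $G_k(S)=\{h\in C(X): |h(x)|=1\ \forall x,\ (h\circ S)\overline h\in G_{k-1}(S)\}$. *)

(* Defs.v *)
From Stdlib Require Import Reals List.
Open Scope R_scope.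

(* Complex numbers as pairs (real part, imaginary part). *)
Definition Cplx : Type := (R * R)%type.
Definition Cmul (z w : Cplx) : Cplx :=
  (fst z * fst w - snd z * snd w, fst z * snd w + snd z * fst w).
Definition Cconj (z : Cplx) : Cplx := (fst z, - snd z).
Definition Cmod (z : Cplx) : R := sqrt (fst z * fst z + snd z * snd z).
Definition C0 : Cplx := (0, 0).
Definition Cdist (z w : Cplx) : R := Cmod (fst z - fst w, snd z - snd w).

Definition is_metric {X : Type} (d : X -> X -> R) : Prop :=
  (forall x y, 0 <= d x y) /\
  (forall x y, d x y = 0 <-> x = y) /\
  (forall x y, d x y = d y x) /\
  (forall x y z, d x z <= d x y + d y z).

Definition is_open {X : Type} (d : X -> X -> R) (U : X -> Prop) : Prop :=
  forall x, U x -> exists eps, 0 < eps /\ forall y, d x y < eps -> U y.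

Definition compact_space {X : Type} (d : X -> X -> R) : Prop :=
  forall (I : Type) (U : I -> X -> Prop),
    (forall i, is_open d (U i)) ->
    (forall x, exists i, U i x) ->
    exists l : list I, forall x, exists i, In i l /\ U i x.

Definition continuous_map {X : Type} (d : X -> X -> R) (S : X -> X) : Prop :=
  forall x eps, 0 < eps -> exists delta, 0 < delta /\
    forall y, d x y < delta -> d (S x) (S y) < eps.

Definition continuous_C {X : Type} (d : X -> X -> R) (h : X -> Cplx) : Prop :=
  forall x eps, 0 < eps -> exists delta, 0 < delta /\
    forall y, d x y < delta -> Cdist (h x) (h y) < eps.

Fixpoint iter {X : Type} (n : nat) (S : X -> X) (x : X) : X :=
  match n with
  | O => x
  | Datatypes.S n' => S (iter n' S x)
  end.

Definition transitive {X : Type} (d : X -> X -> R) (S : X -> X) : Prop :=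
  exists x, forall y eps, 0 < eps -> exists n : nat, d (iter n S x) y < eps.

(* G_k(S) as a set of functions X -> Cplx.  G_0(S) is the set of eigenvalues
   lambda (with a nonzero continuous eigenfunction), identified with the
   constant functions x |-> lambda. *)
Fixpoint G {X : Type} (d : X -> X -> R) (k : nat) (S : X -> X) (h : X -> Cplx)
  : Prop :=
  match k with
  | O => exists lambda : Cplx,
           (forall x, h x = lambda) /\
           exists g : X -> Cplx, continuous_C d g /\ (exists x, g x <> C0) /\
             forall x, g (S x) = Cmul lambda (g x)
  | Datatypes.S k' =>
      continuous_C d h /\ (forall x, Cmod (h x) = 1) /\
      G d k' S (fun x => Cmul (h (S x)) (Cconj (h x)))
  end.

(* Main.v *)
Require Import Defs.
From Stdlib Require Import Reals List Lra Psatz FunctionalExtensionality.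
Open Scope R_scope.

Definition rcont {X : Type} (d : X -> X -> R) (a : X -> R) : Prop :=
  forall x eps, 0 < eps -> exists delta, 0 < delta /\
    forall y, d x y < delta -> Rabs (a x - a y) < eps.

Lemma rabs_le_sqrt a b : Rabs a <= sqrt (a*a + b*b).
Proof.
  rewrite <- sqrt_Rsqr_abs. apply sqrt_le_1_alt. unfold Rsqr. nra.
Qed.

Lemma cont_C_fst {X} (d : X -> X -> R) h :
  continuous_C d h -> rcont d (fun x => fst (h x)).
Proof.
  intros Hc x eps He. destruct (Hc x eps He) as [de [Hde H]].
  exists de; split; auto. intros y Hy. specialize (H y Hy).
  unfold Cdist, Cmod in H; simpl in H.
  eapply Rle_lt_trans; [apply rabs_le_sqrt|exact H].
Qed.

Lemma cont_C_snd {X} (d : X -> X -> R) h :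
  continuous_C d h -> rcont d (fun x => snd (h x)).
Proof.
  intros Hc x eps He. destruct (Hc x eps He) as [de [Hde H]].
  exists de; split; auto. intros y Hy. specialize (H y Hy).
  unfold Cdist, Cmod in H; simpl in H.
  eapply Rle_lt_trans; [|exact H].
  rewrite Rplus_comm. apply rabs_le_sqrt.
Qed.

Lemma cont_C_of {X} (d : X -> X -> R) h :
  rcont d (fun x => fst (h x)) -> rcont d (fun x => snd (h x)) -> continuous_C d h.
Proof.
  intros Ha Hb x eps He.
  destruct (Ha x (eps/2)) as [d1 [Hd1 H1]]; [lra|].
  destruct (Hb x (eps/2)) as [d2 [Hd2 H2]]; [lra|].
  exists (Rmin d1 d2); split; [apply Rmin_pos; auto|].
  intros y Hy.
  assert (A := H1 y (Rlt_le_trans _ _ _ Hy (Rmin_l _ _))).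
  assert (B := H2 y (Rlt_le_trans _ _ _ Hy (Rmin_r _ _))).
  apply Rabs_def2 in A. apply Rabs_def2 in B.
  unfold Cdist, Cmod; simpl.
  rewrite <- (sqrt_square eps) by lra.
  apply sqrt_lt_1_alt. set (p := fst (h x) - fst (h y)) in *. set (q := snd (h x) - snd (h y)) in *. split; nra.
Qed.

Lemma rcont_comp {X} (d : X -> X -> R) T a :
  continuous_map d T -> rcont d a -> rcont d (fun x => a (T x)).
Proof.
  intros HT Ha x eps He.
  destruct (Ha (T x) eps He) as [d1 [Hd1 H1]].
  destruct (HT x d1 Hd1) as [d2 [Hd2 H2]].
  exists d2; split; auto.
Qed.

Lemma rcont_add {X} (d : X -> X -> R) a b :
  rcont d a -> rcont d b -> rcont d (fun x => a x + b x).
Proof.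
  intros Ha Hb x eps He.
  destruct (Ha x (eps/2)) as [d1 [Hd1 H1]]; [lra|].
  destruct (Hb x (eps/2)) as [d2 [Hd2 H2]]; [lra|].
  exists (Rmin d1 d2); split; [apply Rmin_pos; auto|].
  intros y Hy.
  assert (A := H1 y (Rlt_le_trans _ _ _ Hy (Rmin_l _ _))).
  assert (B := H2 y (Rlt_le_trans _ _ _ Hy (Rmin_r _ _))).
  apply Rabs_def2 in A. apply Rabs_def2 in B.
  apply Rabs_def1; lra.
Qed.

Lemma rcont_opp {X} (d : X -> X -> R) a :
  rcont d a -> rcont d (fun x => - a x).
Proof.
  intros Ha x eps He. destruct (Ha x eps He) as [d1 [Hd1 H1]].
  exists d1; split; auto. intros y Hy.
  replace (- a x - - a y) with (- (a x - a y)) by ring.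
  rewrite Rabs_Ropp; auto.
Qed.

Lemma rcont_mul {X} (d : X -> X -> R) a b :
  rcont d a -> rcont d b -> rcont d (fun x => a x * b x).
Proof.
  intros Ha Hb x eps He.
  set (M := Rabs (a x) + Rabs (b x) + 1).
  assert (HM : 0 < M) by (unfold M; pose proof (Rabs_pos (a x)); pose proof (Rabs_pos (b x)); lra).
  set (e1 := Rmin 1 (eps / (2*M))).
  assert (He1 : 0 < e1).
  { unfold e1; apply Rmin_pos; [lra|]. apply Rdiv_lt_0_compat; lra. }
  assert (He1a : e1 <= 1) by apply Rmin_l.
  assert (He1b : e1 * M <= eps / 2).
  { unfold e1. apply Rle_trans with (eps / (2*M) * M).
    apply Rmult_le_compat_r; [lra|apply Rmin_r].
    right. field. lra. }
  destruct (Ha x e1 He1) as [d1 [Hd1 H1]].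
  destruct (Hb x e1 He1) as [d2 [Hd2 H2]].
  exists (Rmin d1 d2); split; [apply Rmin_pos; auto|].
  intros y Hy.
  assert (A := H1 y (Rlt_le_trans _ _ _ Hy (Rmin_l _ _))).
  assert (B := H2 y (Rlt_le_trans _ _ _ Hy (Rmin_r _ _))).
  replace (a x * b x - a y * b y) with (a x * (b x - b y) + b y * (a x - a y)) by ring.
  eapply Rle_lt_trans; [apply Rabs_triang|].
  rewrite !Rabs_mult.
  assert (Hby : Rabs (b y) <= Rabs (b x) + 1).
  { replace (b y) with (b x - (b x - b y)) by ring.
    eapply Rle_trans; [apply Rabs_triang|]. rewrite Rabs_Ropp. lra. }
  assert (P1 : Rabs (a x) * Rabs (b x - b y) <= Rabs (a x) * e1).
  { apply Rmult_le_compat_l; [apply Rabs_pos|lra]. }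
  assert (P2 : Rabs (b y) * Rabs (a x - a y) <= (Rabs (b x) + 1) * e1).
  { apply Rmult_le_compat; try apply Rabs_pos; lra. }
  unfold M in He1b. nra.
Qed.

Lemma cont_Cmul {X} (d : X -> X -> R) h g :
  continuous_C d h -> continuous_C d g -> continuous_C d (fun x => Cmul (h x) (g x)).
Proof.
  intros Hh Hg.
  pose proof (cont_C_fst d h Hh). pose proof (cont_C_snd d h Hh).
  pose proof (cont_C_fst d g Hg). pose proof (cont_C_snd d g Hg).
  apply cont_C_of; unfold Cmul; simpl.
  - apply (rcont_add d (fun x => fst (h x) * fst (g x)) (fun x => - (snd (h x) * snd (g x)))).
    + apply (rcont_mul d (fun x => fst (h x)) (fun x => fst (g x))); auto.
    + apply (rcont_opp d (fun x => snd (h x) * snd (g x))).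
      apply (rcont_mul d (fun x => snd (h x)) (fun x => snd (g x))); auto.
  - apply (rcont_add d (fun x => fst (h x) * snd (g x)) (fun x => snd (h x) * fst (g x))).
    + apply (rcont_mul d (fun x => fst (h x)) (fun x => snd (g x))); auto.
    + apply (rcont_mul d (fun x => snd (h x)) (fun x => fst (g x))); auto.
Qed.

Lemma cont_Cconj {X} (d : X -> X -> R) h :
  continuous_C d h -> continuous_C d (fun x => Cconj (h x)).
Proof.
  intros Hh. apply cont_C_of; unfold Cconj; simpl.
  - apply (cont_C_fst d h Hh).
  - apply (rcont_opp d (fun x => snd (h x))). apply (cont_C_snd d h Hh).
Qed.

Lemma cont_Ccomp {X} (d : X -> X -> R) h T :
  continuous_map d T -> continuous_C d h -> continuous_C d (fun x => h (T x)).
Proof.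
  intros HT Hh x eps He.
  destruct (Hh (T x) eps He) as [d1 [Hd1 H1]].
  destruct (HT x d1 Hd1) as [d2 [Hd2 H2]].
  exists d2; split; auto.
Qed.

Lemma Cmod_mul z w : Cmod (Cmul z w) = Cmod z * Cmod w.
Proof.
  destruct z as [a b], w as [c e]. unfold Cmod, Cmul; simpl.
  rewrite <- sqrt_mult by nra. f_equal. ring.
Qed.

Lemma Cmod_conj z : Cmod (Cconj z) = Cmod z.
Proof. destruct z; unfold Cmod, Cconj; simpl. f_equal. ring. Qed.

Lemma Cmod1_sq z : Cmod z = 1 -> fst z * fst z + snd z * snd z = 1.
Proof.
  unfold Cmod. intros H.
  rewrite <- (sqrt_sqrt (fst z * fst z + snd z * snd z)) by nra.
  rewrite H. ring.
Qed.

Lemma Cmul_conj_cancel a b : Cmod b = 1 -> Cmul (Cmul a (Cconj b)) b = a.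
Proof.
  intros H. apply Cmod1_sq in H. destruct a as [a1 a2], b as [b1 b2].
  simpl in H. unfold Cmul, Cconj; simpl. f_equal.
  - transitivity (a1 * (b1*b1 + b2*b2)); [ring| rewrite H; ring].
  - transitivity (a2 * (b1*b1 + b2*b2)); [ring| rewrite H; ring].
Qed.

Lemma Cmul_conj_self z : Cmod z = 1 -> Cmul z (Cconj z) = (1, 0).
Proof.
  intros H. apply Cmod1_sq in H. destruct z as [a b]; simpl in H.
  unfold Cmul, Cconj; simpl. f_equal; [lra|ring].
Qed.

Lemma Cmul_1_l z : Cmul (1, 0) z = z.
Proof. destruct z; unfold Cmul; simpl; f_equal; ring. Qed.

Lemma Cmod1_nz z : Cmod z = 1 -> z <> C0.
Proof.
  intros H E; subst. unfold Cmod, C0 in H; simpl in H.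
  replace (0*0+0*0) with 0 in H by ring. rewrite sqrt_0 in H. lra.
Qed.

Lemma Cdist_zero z w : (forall eps, 0 < eps -> Cdist z w < eps) -> z = w.
Proof.
  intros H. destruct z as [a b], w as [c e].
  unfold Cdist, Cmod in H; simpl in H.
  assert (Hs : sqrt ((a - c) * (a - c) + (b - e) * (b - e)) = 0).
  { destruct (Req_dec (sqrt ((a - c) * (a - c) + (b - e) * (b - e))) 0); auto.
    pose proof (sqrt_pos ((a - c) * (a - c) + (b - e) * (b - e))).
    specialize (H _ (ltac:(lra) : 0 < sqrt ((a - c) * (a - c) + (b - e) * (b - e)))).
    lra. }
  apply sqrt_eq_0 in Hs; [|apply Rplus_le_le_0_compat; apply Rle_0_sqr].
  pose proof (Rle_0_sqr (a-c)); pose proof (Rle_0_sqr (b-e)); unfold Rsqr in *.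
  assert (E1 : (a-c)*(a-c) = 0) by lra.
  assert (E2 : (b-e)*(b-e) = 0) by lra.
  apply Rmult_integral in E1; apply Rmult_integral in E2.
  f_equal; lra.
Qed.

Lemma invariant_const {X} (d : X -> X -> R) T u :
  is_metric d -> transitive d T -> continuous_C d u ->
  (forall x, u (T x) = u x) -> exists c, forall x, u x = c.
Proof.
  intros [_ [_ [Hsym _]]] [x0 Hx0] Hu Hinv.
  exists (u x0). intros y.
  assert (Horb : forall n, u (iter n T x0) = u x0).
  { induction n; simpl; auto. rewrite Hinv; auto. }
  apply Cdist_zero. intros eps He.
  destruct (Hu y eps He) as [de [Hde H]].
  destruct (Hx0 y de Hde) as [n Hn].
  rewrite <- (Horb n). apply H. rewrite Hsym; auto.
Qed.

Lemma G_ext {X} (d : X -> X -> R) k S h h' :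
  (forall x, h x = h' x) -> G d k S h -> G d k S h'.
Proof.
  intros E. replace h' with h; auto. apply functional_extensionality; auto.
Qed.

Definition P {X} (d : X -> X -> R) (k : nat) : Prop :=
  forall T1 T2 : X -> X,
    continuous_map d T1 -> continuous_map d T2 ->
    transitive d T1 -> transitive d T2 ->
    (forall x, T1 (T2 x) = T2 (T1 x)) ->
    forall h, G d k T1 h -> G d k T2 h.

Definition Q {X} (d : X -> X -> R) (k : nat) : Prop :=
  forall T1 T2 : X -> X,
    continuous_map d T1 -> continuous_map d T2 ->
    transitive d T1 -> transitive d T2 ->
    (forall x, T1 (T2 x) = T2 (T1 x)) ->
    forall u v, continuous_C d u -> (forall x, Cmod (u x) = 1) ->
    (forall x, v x = Cmul (u (T1 x)) (Cconj (u x))) ->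
    G d k T2 v -> G d k T1 v.

Lemma key_id {X} (T1 T2 : X -> X) (h : X -> Cplx) :
  (forall x, T1 (T2 x) = T2 (T1 x)) ->
  forall x,
  Cmul (Cmul (h (T2 (T1 x))) (Cconj (h (T1 x))))
       (Cconj (Cmul (h (T2 x)) (Cconj (h x)))) =
  Cmul (Cmul (h (T1 (T2 x))) (Cconj (h (T2 x))))
       (Cconj (Cmul (h (T1 x)) (Cconj (h x)))).
Proof.
  intros Hc x. rewrite Hc.
  destruct (h (T2 (T1 x))) as [a1 a2], (h (T1 x)) as [b1 b2],
    (h (T2 x)) as [c1 c2], (h x) as [e1 e2].
  unfold Cmul, Cconj; simpl. f_equal; ring.
Qed.

Lemma u_props {X} (d : X -> X -> R) T h :
  continuous_map d T -> continuous_C d h -> (forall x, Cmod (h x) = 1) ->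
  continuous_C d (fun x => Cmul (h (T x)) (Cconj (h x))) /\
  (forall x, Cmod (Cmul (h (T x)) (Cconj (h x))) = 1).
Proof.
  intros HT Hh Hm. split.
  - apply (cont_Cmul d (fun x => h (T x)) (fun x => Cconj (h x))).
    + apply cont_Ccomp; auto.
    + apply cont_Cconj; auto.
  - intros x. rewrite Cmod_mul, Cmod_conj, !Hm. ring.
Qed.

Lemma P1 {X} (d : X -> X -> R) : is_metric d -> P d 1.
Proof.
  intros Hmet T1 T2 HT1 HT2 Htr1 Htr2 Hc h [Hh [Hm [lam [Hf _]]]].
  simpl in Hf.
  destruct Htr1 as [x0 Hx0] eqn:Etr.
  assert (Hlam : Cmod lam = 1).
  { rewrite <- (Hf x0). rewrite Cmod_mul, Cmod_conj, !Hm. ring. }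
  destruct (u_props d T2 h HT2 Hh Hm) as [Huc Hum].
  set (u := fun x => Cmul (h (T2 x)) (Cconj (h x))) in *.
  assert (Hinv : forall x, u (T1 x) = u x).
  { intros x. rewrite <- (Cmul_conj_cancel (u (T1 x)) (u x)) by apply Hum.
    unfold u at 1 2. rewrite (key_id T1 T2 h Hc x).
    rewrite (Hf (T2 x)), (Hf x), Cmul_conj_self by auto. apply Cmul_1_l. }
  destruct (invariant_const d T1 u Hmet (ex_intro _ x0 Hx0) Huc Hinv) as [c Hcu].
  split; [auto|split; [auto|]]. simpl.
  exists c. split; [exact Hcu|].
  exists h. split; [auto|split].
  - exists x0. apply Cmod1_nz; auto.
  - intros x. rewrite <- (Hcu x). unfold u. rewrite Cmul_conj_cancel; auto.
Qed.

Lemma Q0 {X} (d : X -> X -> R) : Q d 0.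
Proof.
  intros T1 T2 HT1 HT2 Htr1 Htr2 Hc u v Huc Hum Hv [mu [Hmu _]].
  exists mu. split; [auto|].
  exists u. split; [auto|split].
  - destruct Htr1 as [x0 _]. exists x0. apply Cmod1_nz; auto.
  - intros x. rewrite <- (Hmu x), Hv. rewrite Cmul_conj_cancel; auto.
Qed.

Lemma QS {X} (d : X -> X -> R) k : P d (S k) -> Q d (S k).
Proof.
  intros HP T1 T2 HT1 HT2 Htr1 Htr2 Hc u v Huc Hum Hv HG.
  apply (HP T2 T1); auto.
Qed.

Lemma stepP {X} (d : X -> X -> R) k : P d (S k) -> Q d k -> P d (S (S k)).
Proof.
  intros HP HQ T1 T2 HT1 HT2 Htr1 Htr2 Hc h [Hh [Hm Hf]].
  destruct (u_props d T2 h HT2 Hh Hm) as [Huc Hum].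
  destruct (u_props d T1 h HT1 Hh Hm) as [Hfc Hfm].
  split; [auto|split; [auto|]].
  apply (HP T1 T2); auto.
  split; [auto|split; [auto|]].
  pose proof (HP T1 T2 HT1 HT2 Htr1 Htr2 Hc _ Hf) as [_ [_ Hf2]].
  apply (G_ext d k T1 (fun x => Cmul (Cmul (h (T1 (T2 x))) (Cconj (h (T2 x))))
       (Cconj (Cmul (h (T1 x)) (Cconj (h x)))))).
  - intros x. simpl. symmetry. apply key_id. auto.
  - apply (HQ T1 T2 HT1 HT2 Htr1 Htr2 Hc
      (fun x => Cmul (h (T2 x)) (Cconj (h x))) _ Huc Hum); [|exact Hf2].
    intros x. simpl. symmetry. apply key_id. auto.
Qed.

Lemma allP {X} (d : X -> X -> R) : is_metric d -> forall k, P d (S k) /\ P d (S (S k)).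
Proof.
  intros Hmet. induction k.
  - split; [apply P1; auto|]. apply stepP; [apply P1; auto|apply Q0].
  - destruct IHk as [H1 H2]. split; auto. apply stepP; auto. apply QS; auto.
Qed.

Lemma iter_comm {X} (T : X -> X) n x : iter n T (T x) = T (iter n T x).
Proof. induction n; simpl; congruence. Qed.

Lemma iter_cont {X} (d : X -> X -> R) T n :
  continuous_map d T -> continuous_map d (iter n T).
Proof.
  intros HT. induction n.
  - intros x eps He. exists eps; split; auto.
  - intros x eps He. simpl.
    destruct (HT (iter n T x) eps He) as [d1 [Hd1 H1]].
    destruct (IHn x d1 Hd1) as [d2 [Hd2 H2]].
    exists d2; split; auto.
Qed.

Theorem lemma2p2 (X : Type) (d : X -> X -> R)
  (Hmetric : is_metric d) (Hcompact : compact_space d) :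
  (forall T1 T2 : X -> X,
     continuous_map d T1 -> continuous_map d T2 ->
     transitive d T1 -> transitive d T2 ->
     (forall x, T1 (T2 x) = T2 (T1 x)) ->
     forall k : nat, (1 <= k)%nat ->
       forall h : X -> Cplx, G d k T1 h <-> G d k T2 h) /\
  (forall (T : X -> X) (m : nat),
     continuous_map d T -> (2 <= m)%nat ->
     transitive d T -> transitive d (iter m T) ->
     forall k : nat, (1 <= k)%nat ->
       forall h : X -> Cplx, G d k T h <-> G d k (iter m T) h).
Proof.
  assert (Part1 : forall T1 T2 : X -> X,
     continuous_map d T1 -> continuous_map d T2 ->
     transitive d T1 -> transitive d T2 ->
     (forall x, T1 (T2 x) = T2 (T1 x)) ->
     forall k : nat, (1 <= k)%nat ->
       forall h : X -> Cplx, G d k T1 h <-> G d k T2 h).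
  { intros T1 T2 HT1 HT2 Htr1 Htr2 Hc k Hk h.
    destruct k as [|k]; [inversion Hk|].
    destruct (allP d Hmetric k) as [HP _].
    split; intros HG.
    - apply (HP T1 T2); auto.
    - apply (HP T2 T1); auto. }
  split; [exact Part1|].
  intros T m HT Hm Htr Htrm k Hk h.
  apply Part1; auto.
  - apply iter_cont; auto.
  - intros x. symmetry. apply iter_comm.
Qed.
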